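(* Let $P:[0,\infty)\to[-\tfrac14,\infty)$ be defined by $P(r)=r-\frac{1}{4(r+1)}$. For any $a_0\ge0$, define $a_{n+1}=P(a_n)$ recursively (as long as $a_n\ge0$). Then there exists an integer $N_0$ such that $0\le a_{N_0}<1$ and $-\tfrac14\le a_{N_0+1}<0$. Conversely, for any $a\in[0,1)$ and any $b>a$, there exists a sequence $a_0,\dots,a_{N_0}$ defined by the recursion $a_{n+1}=P(a_n)$ such that $a_0>b$ and $a_{N_0}=a$. *)

(* Defs.v *)
From Stdlib Require Import Reals.
Open Scope R_scope.

Definition P (r : R) : R := r - 1 / (4 * (r + 1)).

Fixpoint orbit (a0 : R) (n : nat) : R :=
  match n with
  | O => a0
  | S k => P (orbit a0 k)
  end.

(* Main.v *)
Require Import Defs.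
From Stdlib Require Import Reals Lra Lia ZArith.
Open Scope R_scope.

Lemma arch_nat (r : R) : exists n : nat, r < INR n.
Proof.
  destruct (archimed r) as [H1 _].
  destruct (Z_lt_le_dec (up r) 0) as [Hl|Hl].
  - exists O. simpl. apply IZR_lt in Hl. lra.
  - exists (Z.to_nat (up r)). rewrite INR_IZR_INZ, Z2Nat.id by lia. lra.
Qed.

Lemma P_ge (r : R) : 0 <= r -> -(1/4) <= P r.
Proof.
  intro H. unfold P.
  assert (1 / (4 * (r + 1)) <= 1/4).
  { apply Rmult_le_reg_r with (4 * (r+1)). nra.
    field_simplify; nra. }
  lra.
Qed.

Lemma P_big (r : R) : 1 <= r -> 0 <= P r.
Proof.
  intro H. unfold P.
  assert (1 / (4 * (r + 1)) <= 1/8).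
  { apply Rmult_le_reg_r with (4 * (r+1)). nra.
    field_simplify; nra. }
  lra.
Qed.

Lemma P_dec (r M : R) : 0 <= r -> r <= M -> P r <= r - 1 / (4 * (M + 1)).
Proof.
  intros H1 H2. unfold P.
  assert (1 / (4 * (M + 1)) <= 1 / (4 * (r + 1))).
  { apply Rmult_le_reg_r with (4 * (r+1) * (4 * (M+1))). nra.
    field_simplify; nra. }
  lra.
Qed.

Lemma orbit_S (x : R) (n : nat) : orbit x (S n) = orbit (P x) n.
Proof. induction n; simpl; [reflexivity|]. simpl in IHn. rewrite IHn. reflexivity. Qed.

Lemma part1 (M : R) (HM : 0 <= M) (m : nat) : forall x, 0 <= x -> x <= M ->
  x < INR m * (1 / (4 * (M + 1))) ->
  exists N0 : nat,
       (forall n : nat, (n <= N0)%nat -> 0 <= orbit x n) /\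
       0 <= orbit x N0 < 1 /\
       -(1/4) <= orbit x (S N0) < 0.
Proof.
  assert (Hd : 0 < 1 / (4 * (M + 1))) by (apply Rdiv_lt_0_compat; lra).
  induction m as [|m IH]; intros x H0 H1 H2.
  - simpl in H2. lra.
  - destruct (Rlt_le_dec (P x) 0) as [Hn|Hp].
    + exists O. split; [intros n Hn'; assert (n = O) by lia; subst; simpl; lra|].
      simpl. split; [split; [lra|]|split; [apply P_ge; lra|lra]].
      destruct (Rlt_le_dec x 1); [lra|]. pose proof (P_big x r). lra.
    + 
      pose proof (P_dec x M H0 H1) as Hd2.
      rewrite S_INR in H2.
      destruct (IH (P x) Hp ltac:(lra) ltac:(lra)) as [N [A [B C]]].
      exists (S N). rewrite (orbit_S x N), (orbit_S x (S N)). split; [|split; assumption].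
      intros n Hn. destruct n as [|n]; [simpl; lra|]. rewrite orbit_S. apply A. lia.
Qed.

Definition Q (y : R) : R := ((y + 1) + sqrt ((y + 1) ^ 2 + 1)) / 2 - 1.

Lemma Q_spec (y : R) : 0 <= y -> y <= Q y /\ P (Q y) = y.
Proof.
  intro Hy. set (t := sqrt ((y + 1) ^ 2 + 1)).
  assert (Ht : t * t = (y + 1) ^ 2 + 1) by (apply sqrt_sqrt; nra).
  assert (Ht0 : 0 <= t) by apply sqrt_pos.
  assert (Hty : y + 1 <= t) by nra.
  unfold Q; fold t. split; [lra|].
  unfold P. set (s := (y + 1 + t) / 2).
  assert (Hs : 0 < s) by (unfold s; lra).
  replace (s - 1 + 1) with s by ring.
  assert (4 * s * (s - 1 - y) = 1) by (unfold s; nra).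
  assert (1 / (4 * s) = s - 1 - y) by (apply Rmult_eq_reg_l with (4*s); [rewrite H; field; lra|lra]).
  lra.
Qed.

Lemma part2 (b : R) (Hb : 0 <= b) (m : nat) : forall y, 0 <= y ->
  b - y < INR m * (1 / (4 * (b + 1))) ->
  exists (a0 : R) (N0 : nat),
       b < a0 /\
       (forall n : nat, (n <= N0)%nat -> 0 <= orbit a0 n) /\
       orbit a0 N0 = y.
Proof.
  assert (Hd : 0 < 1 / (4 * (b + 1))) by (apply Rdiv_lt_0_compat; lra).
  induction m as [|m IH]; intros y H0 H2.
  - exists y, O. simpl in H2. split; [lra|]. split; [|reflexivity].
    intros n Hn. assert (n = O) by lia. subst. simpl. lra.
  - destruct (Rlt_le_dec b y) as [Hby|Hby].
    + exists y, O. split; [lra|]. split; [|reflexivity].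
      intros n Hn. assert (n = O) by lia. subst. simpl. lra.
    + destruct (Q_spec y H0) as [Hz HP].
      set (z := Q y) in *.
      assert (Hm : b - z < INR m * (1 / (4 * (b + 1)))).
      { rewrite S_INR in H2. pose proof (pos_INR m).
        destruct (Rlt_le_dec b z) as [Hbz|Hbz]; [nra|].
        pose proof (P_dec z b ltac:(lra) Hbz). lra. }
      destruct (IH z ltac:(lra) Hm) as [x [N [A [B C]]]].
      exists x, (S N). split; [exact A|]. split.
      * intros n Hn. destruct (Nat.eq_dec n (S N)) as [->|Hne].
        -- simpl. rewrite C, HP. lra.
        -- apply B. lia.
      * simpl. rewrite C. exact HP.
Qed.

Theorem mainTheorem5 :
  (forall a0 : R, 0 <= a0 ->
     exists N0 : nat,
       (forall n : nat, (n <= N0)%nat -> 0 <= orbit a0 n) /\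
       0 <= orbit a0 N0 < 1 /\
       -(1/4) <= orbit a0 (S N0) < 0)
  /\
  (forall a b : R, 0 <= a < 1 -> a < b ->
     exists (a0 : R) (N0 : nat),
       b < a0 /\
       (forall n : nat, (n <= N0)%nat -> 0 <= orbit a0 n) /\
       orbit a0 N0 = a).
Proof.
  split.
  - intros a0 H.
    assert (Hd : 0 < 1 / (4 * (a0 + 1))) by (apply Rdiv_lt_0_compat; lra).
    destruct (arch_nat (a0 / (1 / (4 * (a0 + 1))))) as [m Hm].
    apply (part1 a0 H m a0 H (Rle_refl _)).
    apply Rmult_lt_reg_r with (/ (1 / (4 * (a0 + 1)))).
    + apply Rinv_0_lt_compat; lra.
    + rewrite Rmult_assoc, Rinv_r, Rmult_1_r by lra. exact Hm.
  - intros a b Ha Hab.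
    assert (Hd : 0 < 1 / (4 * (b + 1))) by (apply Rdiv_lt_0_compat; lra).
    destruct (arch_nat ((b - a) / (1 / (4 * (b + 1))))) as [m Hm].
    apply (part2 b ltac:(lra) m a ltac:(lra)).
    apply Rmult_lt_reg_r with (/ (1 / (4 * (b + 1)))).
    + apply Rinv_0_lt_compat; lra.
    + rewrite Rmult_assoc, Rinv_r, Rmult_1_r by lra. exact Hm.
Qed.
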